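(* For any simple undirected graph $G$, $$n_G(\mathcal{C}_4)=\frac14\sum_{st\in E}\sum_{u\in\Gamma(t)\setminus\{s\}}\big(|c(s,u)|-1\big),$$ where in the outer sum each edge $\{s,t\}$ appears once, with its endpoints named $s$ and $t$ in an arbitrary fixed way.
   Context: $\Gamma(x)$ is the neighbourhood of $x$ and $c(s,u)=\Gamma(s)\cap\Gamma(u)$. $\mathcal{C}_4$ is the cycle on 4 vertices and $n_G(\mathcal{C}_4)$ the number of subgraphs of $G$ isomorphic to it. *)

(* Defs.v *)
From mathcomp Require Import all_boot all_order all_algebra.
Set Implicit Arguments. Unset Strict Implicit. Unset Printing Implicit Defensive.

Definition simple_graph (T : finType) (e : rel T) : Prop :=
  symmetric e /\ irreflexive e.

Definition nbhd (T : finType) (e : rel T) (x : T) : {set T} := [set y | e x y].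

Definition common_nbhd (T : finType) (e : rel T) (s u : T) : {set T} :=
  nbhd e s :&: nbhd e u.

Definition edge_set (T : finType) (e : rel T) : {set {set T}} :=
  [set A : {set T} | [exists x, exists y, e x y && (A == [set x; y])]].

(* F (a set of edges of G) is the edge set of a subgraph of G isomorphic to C_4.
   (A C_4-subgraph has no isolated vertex, so it is determined by its edges.) *)
Definition is_C4_subgraph (T : finType) (e : rel T) (F : {set {set T}}) : bool :=
  (F \subset edge_set e) &&
  [exists a, exists b, exists c, exists d,
     [&& uniq [:: a; b; c; d] &
        F == [set [set a; b]; [set b; c]; [set c; d]; [set d; a]]]].

Definition nC4 (T : finType) (e : rel T) : nat :=
  #|[set F : {set {set T}} | is_C4_subgraph e F]|.

(* O is an orientation of the edges of G: each edge {s,t} is listed exactly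
   once, as an ordered pair (s,t) with an arbitrary choice of naming. *)
Definition orientation (T : finType) (e : rel T) (O : {set T * T}) : Prop :=
  (forall p, p \in O -> e p.1 p.2) /\
  (forall x y, e x y -> ((x, y) \in O) != ((y, x) \in O)).

(* Main.v *)
Require Import Defs.
From mathcomp Require Import all_boot all_order all_algebra.
From mathcomp Require Import zify ring.
Import GRing.Theory Num.Theory.
Set Implicit Arguments. Unset Strict Implicit. Unset Printing Implicit Defensive.

Definition eq2 (S : eqType) (x y z w : S) := ((x == z) && (y == w)) || ((x == w) && (y == z)).
Definition inC (S : eqType) (x y a b c d : S) :=
  [|| eq2 x y a b, eq2 x y b c, eq2 x y c d | eq2 x y d a].
Definition cycEq (S : eqType) (x1 x2 x3 x4 a b c d : S) :=
  [&& inC x1 x2 a b c d, inC x2 x3 a b c d, inC x3 x4 a b c d, inC x4 x1 a b c d,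
      inC a b x1 x2 x3 x4, inC b c x1 x2 x3 x4, inC c d x1 x2 x3 x4 & inC d a x1 x2 x3 x4].
Definition dih (S : Type) (a b c d : S) : seq (S * S * S * S) :=
  [:: (a, b, c, d); (b, c, d, a); (c, d, a, b); (d, a, b, c);
      (b, a, d, c); (a, d, c, b); (d, c, b, a); (c, b, a, d)].
Definition o0 : 'I_4 := @Ordinal 4 0 isT.
Definition o1 : 'I_4 := @Ordinal 4 1 isT.
Definition o2 : 'I_4 := @Ordinal 4 2 isT.
Definition o3 : 'I_4 := @Ordinal 4 3 isT.

Lemma brute (k1 k2 k3 k4 : 'I_4) : uniq [:: k1; k2; k3; k4] ->
  cycEq k1 k2 k3 k4 o0 o1 o2 o3 -> (k1, k2, k3, k4) \in dih o0 o1 o2 o3.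
Proof.
move=> U C; move: C; apply/implyP; move: U; apply/implyP.
by case: k1 => [[|[|[|[|m1]]]] H1] //; case: k2 => [[|[|[|[|m2]]]] H2] //;
   case: k3 => [[|[|[|[|m3]]]] H3] //; case: k4 => [[|[|[|[|m4]]]] H4].
Qed.

Lemma dih_ok : all (fun r => uniq [:: r.1.1.1; r.1.1.2; r.1.2; r.2] &&
   cycEq r.1.1.1 r.1.1.2 r.1.2 r.2 o0 o1 o2 o3) (dih o0 o1 o2 o3) && uniq (dih o0 o1 o2 o3).
Proof. by []. Qed.

Definition cyc4 (S : finType) (x1 x2 x3 x4 : S) : {set {set S}} :=
  [set [set x1; x2]; [set x2; x3]; [set x3; x4]; [set x4; x1]].

Lemma set2_eq (S : finType) (x y z w : S) : ([set x; y] == [set z; w]) = eq2 x y z w.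
Proof.
apply/eqP/idP.
- move=> E.
  have hx : x \in [set z; w] by rewrite -E !inE eqxx.
  have hy : y \in [set z; w] by rewrite -E !inE eqxx ?orbT.
  have hz : z \in [set x; y] by rewrite E !inE eqxx.
  have hw : w \in [set x; y] by rewrite E !inE eqxx ?orbT.
  move: hx hy hz hw; rewrite /eq2 !inE.
  by do 4 (case/orP=> /eqP ?); subst; rewrite ?eqxx ?orbT.
- by rewrite /eq2; case/orP => /andP[/eqP-> /eqP->] //; rewrite setUC.
Qed.

Lemma cycE (S : finType) (x1 x2 x3 x4 a b c d : S) :
  (cyc4 x1 x2 x3 x4 == cyc4 a b c d) = cycEq x1 x2 x3 x4 a b c d.
Proof.
rewrite eqEsubset !subUset !sub1set !inE !set2_eq /cycEq /inC.
by rewrite -!andbA -!orbA.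
Qed.

Lemma transfer (S R : eqType) (g : S -> R) : injective g ->
  forall x1 x2 x3 x4 a b c d,
  cycEq (g x1) (g x2) (g x3) (g x4) (g a) (g b) (g c) (g d) = cycEq x1 x2 x3 x4 a b c d.
Proof. by move=> gi *; rewrite /cycEq /inC /eq2 !(inj_eq gi). Qed.

Lemma inC_mem (S : eqType) (x y a b c d : S) : inC x y a b c d ->
  (x \in [:: a; b; c; d]) && (y \in [:: a; b; c; d]).
Proof.
rewrite /inC /eq2.
by case/or4P; case/orP; case/andP => /eqP-> /eqP->; rewrite !inE !eqxx ?orbT.
Qed.


Definition map4 (S R : Type) (g : S -> R) (q : S * S * S * S) : R * R * R * R :=
  (g q.1.1.1, g q.1.1.2, g q.1.2, g q.2).
Definition isD (T : finType) (e : rel T) (q : T * T * T * T) :=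
  uniq [:: q.1.1.1; q.1.1.2; q.1.2; q.2] &&
  [&& e q.1.1.1 q.1.1.2, e q.1.1.2 q.1.2, e q.1.2 q.2 & e q.2 q.1.1.1].
Definition cycq (T : finType) (q : T * T * T * T) := cyc4 q.1.1.1 q.1.1.2 q.1.2 q.2.

Lemma map4_inj (S R : eqType) (g : S -> R) : injective g -> injective (map4 g).
Proof.
move=> gi [[[a b] c] d] [[[a' b'] c'] d'] [] /gi -> /gi -> /gi -> /gi ->. by [].
Qed.

Lemma fiber8 (T : finType) (e : rel T) (q0 : T * T * T * T) : symmetric e -> isD e q0 ->
  #|[set q | isD e q && (cycq q == cycq q0)]| = 8.
Proof.
move=> esym; case: q0 => [[[a b] c] d]; rewrite /isD /= => /andP[U0 /and4P[eab ebc ecd eda]].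
have e' : forall x y, e x y -> e y x by move=> x y; rewrite esym.
pose s := [:: a; b; c; d].
pose g (i : 'I_4) := nth a s i.
have gi : injective g.
  by move=> i j /eqP; rewrite /g nth_uniq // => /eqP /val_inj.
have memg x : x \in s -> exists k : 'I_4, x = g k.
  move=> xs; exists (Ordinal (etrans (index_mem x s) xs)).
  by rewrite /g /= nth_index.
have -> : [set q | isD e q && (cycq q == cycq (a, b, c, d))] =
          [set q in map (map4 g) (dih o0 o1 o2 o3)].
  apply/setP => -[[[x1 x2] x3] x4]; rewrite !in_set.
  apply/idP/idP.
  - case/andP => /andP[Ux _]; rewrite /cycq /= cycE => C.
    move: (C) => /and4P[/inC_mem/andP[m1 m2] /inC_mem/andP[_ m3] /inC_mem/andP[_ m4] _].
    case: (memg _ m1) => k1 E1; case: (memg _ m2) => k2 E2.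
    case: (memg _ m3) => k3 E3; case: (memg _ m4) => k4 E4.
    subst x1 x2 x3 x4.
    have C' : cycEq (g k1) (g k2) (g k3) (g k4) (g o0) (g o1) (g o2) (g o3) := C.
    rewrite transfer // in C'.
    have Ux' : uniq (map g [:: k1; k2; k3; k4]) := Ux.
    rewrite (map_inj_uniq gi) in Ux'.
    change (map4 g (k1, k2, k3, k4) \in map (map4 g) (dih o0 o1 o2 o3)).
    by rewrite (mem_map (map4_inj gi)); apply: brute.
  - case/mapP => r rin ->.
    case/andP: dih_ok => /allP Hall _; case/andP: (Hall r rin) => Ur Cr.
    apply/andP; split; last first.
      rewrite /cycq /= cycE.
      by rewrite -(transfer gi r.1.1.1 r.1.1.2 r.1.2 r.2 o0 o1 o2 o3) in Cr.
    apply/andP; split.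
      by change (uniq (map g [:: r.1.1.1; r.1.1.2; r.1.2; r.2])); rewrite (map_inj_uniq gi).
    move: rin; rewrite /dih !inE.
    by do ![case/orP => [/eqP -> | ] | move/eqP ->];
      rewrite /= ?eab ?ebc ?ecd ?eda ?(e' _ _ eab) ?(e' _ _ ebc) ?(e' _ _ ecd) ?(e' _ _ eda).
have Um : uniq (map (map4 g) (dih o0 o1 o2 o3)) by rewrite (map_inj_uniq (map4_inj gi)).
by rewrite cardsE; move/card_uniqP: Um => ->; rewrite size_map.
Qed.


Lemma C4E (T : finType) (e : rel T) : simple_graph e ->
  [set F | is_C4_subgraph e F] = @cycq T @: [set q | isD e q].
Proof.
move=> [esym eirr]; apply/setP => F; rewrite inE; apply/idP/imsetP.
- case/andP => sub /existsP[a /existsP[b /existsP[c /existsP[d /andP[U /eqP FE]]]]].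
  have edge x y : [set x; y] \in F -> e x y.
    move/(subsetP sub); rewrite inE => /existsP[x' /existsP[y' /andP[exy]]].
    rewrite set2_eq /eq2 => /orP[/andP[/eqP-> /eqP->] | /andP[/eqP-> /eqP->]] //.
    by rewrite esym.
  exists (a, b, c, d); last by rewrite FE.
  rewrite inE; apply/andP; split; first exact: U.
  by rewrite /= !edge // FE !inE eqxx ?orbT.
- case=> -[[[x1 x2] x3] x4]; rewrite inE /isD /= => /andP[U /and4P[e12 e23 e34 e41]] ->.
  apply/andP; split.
    have ed x y : e x y -> [set x; y] \in edge_set e.
      by move=> h; rewrite inE; apply/existsP; exists x; apply/existsP; exists y; rewrite h eqxx.
    apply/subsetP => X HX; rewrite /cycq /cyc4 /= !inE -!orbA in HX.
    by case/or4P: HX => /eqP ->; apply: ed.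
  apply/existsP; exists x1; apply/existsP; exists x2; apply/existsP; exists x3.
  by apply/existsP; exists x4; apply/andP; split; [exact: U | exact/eqP].
Qed.

Lemma cardD (T : finType) (e : rel T) : simple_graph e ->
  #|[set q | isD e q]| = 8 * nC4 e.
Proof.
move=> sg; rewrite /nC4 (C4E sg) -sum1_card (partition_big_imset (@cycq T)) /=.
rewrite mulnC -sum_nat_const; apply: eq_bigr => F /imsetP[q0 q0in ->].
rewrite -(fiber8 (proj1 sg) (_ : isD e q0)); last by rewrite inE in q0in.
rewrite -sum1_card; apply: eq_bigl => q; rewrite !inE.
by [].
Qed.

Definition rv (T : Type) (q : T * T * T * T) : T * T * T * T :=
  (q.1.1.2, q.1.1.1, q.2, q.1.2).

Lemma rvK (T : Type) : cancel (@rv T) (@rv T).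
Proof. by case=> [[[a b] c] d]. Qed.

Lemma cardW (T : finType) (e : rel T) (O : {set T * T}) : simple_graph e -> orientation e O ->
  #|[set q | isD e q]| = 2 * #|[set q | isD e q && ((q.1.1.1, q.1.1.2) \in O)]|.
Proof.
move=> [esym eirr] [Oe Oor].
have := cardID [pred q | (q.1.1.1, q.1.1.2) \in O] [set q | isD e q].
have -> : #|[predI [set q | isD e q] & [pred q | (q.1.1.1, q.1.1.2) \in O]]| =
          #|[set q | isD e q && ((q.1.1.1, q.1.1.2) \in O)]|.
  by apply: eq_card => q; rewrite !inE.
have -> : #|[predD [set q | isD e q] & [pred q | (q.1.1.1, q.1.1.2) \in O]]| =
          #|@rv T @: [set q | isD e q && ((q.1.1.1, q.1.1.2) \in O)]|.
  apply: eq_card => q; rewrite (can2_imset_pre _ (@rvK T) (@rvK T)) !inE.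
  case: q => [[[a b] c] d]; rewrite /isD /=.
  have H : uniq [:: b; a; d; c] = uniq [:: a; b; c; d].
    by apply: perm_uniq; apply/permP => P /=; lia.
  simpl in H; rewrite H.
  rewrite (esym b a) (esym a d) (esym d c) (esym c b).
  move: [&& a \notin [:: b; c; d], b \notin [:: c; d], c \notin [:: d] & true] => u.
  have := @Oor a b.
  by case: (e a b); case: ((a, b) \in O); case: ((b, a) \in O); case: u;
    case: (e b c); case: (e c d); case: (e d a) => //= /(_ isT).
rewrite card_imset; last exact: can_inj (@rvK T).
by move=> <-; rewrite addnn -mul2n.
Qed.


Lemma sumW (T : finType) (e : rel T) (O : {set T * T}) : simple_graph e -> orientation e O ->
  \sum_(p in O) \sum_(u in nbhd e p.2 :\ p.1) #|common_nbhd e p.1 u :\ p.2| =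
  #|[set q | isD e q && ((q.1.1.1, q.1.1.2) \in O)]|.
Proof.
move=> [esym eirr] [Oe Oor].
transitivity (\sum_(p in O) \sum_(u in nbhd e p.2 :\ p.1)
                \sum_(w in common_nbhd e p.1 u :\ p.2) 1).
  by apply: eq_bigr => p _; apply: eq_bigr => u _; rewrite sum1_card.
rewrite pair_big_dep /= pair_big_dep /= sum1dep_card.
apply: eq_card => -[[[s t] u] w]; rewrite !inE /isD /=.
have ne x y : e x y -> (x == y) = false.
  by move=> h; apply/eqP => E; rewrite E eirr in h.
case hO: ((s, t) \in O); last by rewrite !andbF.
have est : e s t := Oe _ hO.
rewrite !inE est andbT /=.
apply/idP/idP.
- move=> /and4P[/andP[us etu] wt esw euw].
  by rewrite etu euw (esym w s) esw (ne _ _ est) (ne _ _ esw) (ne _ _ etu) (ne _ _ euw)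
    (eq_sym s u) (negbTE us) (eq_sym t w) (negbTE wt).
- move=> /and4P[/and4P[nsx ntx nuw _] etu euw ews].
  move: nsx ntx; rewrite !negb_or => /and3P[_ su sw] /andP[_ tw].
  by rewrite etu euw (esym s w) ews (eq_sym u s) (negbTE su) (eq_sym w t) (negbTE tw).
Qed.

Local Open Scope ring_scope.

Theorem proposition11 (T : finType) (e : rel T) (O : {set T * T}) :
  simple_graph e -> orientation e O ->
  (nC4 e)%:R =
    (1 / 4 : rat) *
    \sum_(p in O) \sum_(u in nbhd e p.2 :\ p.1)
       ((#|common_nbhd e p.1 u|)%:R - 1).
Proof.
move=> sg or; have [esym eirr] := sg; have [Oe Oor] := or.
have key : \sum_(p in O) \sum_(u in nbhd e p.2 :\ p.1)
     ((#|common_nbhd e p.1 u|)%:R - 1 : rat) =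
   (\sum_(p in O) \sum_(u in nbhd e p.2 :\ p.1) #|common_nbhd e p.1 u :\ p.2|)%:R.
  rewrite natr_sum; apply: eq_bigr => p pO; rewrite natr_sum; apply: eq_bigr => u uin.
  have tin : p.2 \in common_nbhd e p.1 u.
    move: uin; rewrite /common_nbhd /nbhd !inE (Oe _ pO) => /andP[_ etu].
    by rewrite esym.
  by rewrite (cardsD1 p.2) tin add1n mulrSr addrK.
rewrite key sumW //.
have h4 : #|[set q | isD e q && ((q.1.1.1, q.1.1.2) \in O)]| = (4 * nC4 e)%N.
  by have := cardD sg; rewrite (cardW sg or); lia.
by rewrite h4 natrM; field.
Qed.
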